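(* Let $S$ and $T$ be two distinct finite symmetric generating sets of the finitely generated group $G$. Then, for any action $\Phi$ of $G$ on $X$ and any Borel measure $\mu$ on $X$: (i) $\Phi$ has shadowing with respect to $S$ if and only if it has shadowing with respect to $T$. (ii) $\Phi$ is topologically stable with respect to $S$ if and only if it is topologically stable with respect to $T$. (iii) $\Phi$ is persistent with respect to $S$ if and only if it is persistent with respect to $T$. (iv) $\Phi$ has $\mu$-shadowing with respect to $S$ if and only if it has $\mu$-shadowing with respect to $T$. (v) $\Phi$ is $\mu$-topologically stable with respect to $S$ if and only if it is $\mu$-topologically stable with respect to $T$. (vi) $\Phi$ is $\mu$-persistent with respect to $S$ if and only if it is $\mu$-persistent with respect to $T$.
   Context: $G$ is a finitely generated group and $(X,\mathcal{U})$ is a uniform space with uniformity $\mathcal{U}$ (whose members are called entourages). For $U,V\subset X\times X$, $U\circ V=\{(x,y)\mid \exists z,\ (x,z)\in U,(z,y)\in V\}$, and $D[x]=\{y\mid (x,y)\in D\}$. An action of $G$ on $X$ is a map $\Phi:G\times X\to X$ such that each $\Phi_g=\Phi(g,\cdot)$ is a uniform equivalence, $\Phi_e=\mathrm{id}$, and $\Phi_{g_1g_2}=\Phi_{g_1}\circ\Phi_{g_2}$; $Act(G,X)$ denotes the set of such actions. Generating sets are finite and symmetric. For a generating set $S$ and $D\in\mathcal{U}$: $\{x_g\}_{g\in G}$ is a $D$-pseudo orbit (w.r.t. $S$) if $(x_{sg},\Phi_s(x_g))\in D$ for all $s\in S$, $g\in G$; it is $E$-shadowed by $x$ if $(x_g,\Phi_g(x))\in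 E$ for all $g\in G$; it is through a set $B$ if $x_e\in B$. With respect to $S$: - $\Phi$ has shadowing if for every $E\in\mathcal{U}$ there is $D\in\mathcal{U}$ such that every $D$-pseudo orbit is $E$-shadowed by some point. - $\Phi$ is topologically stable if for every $E\in\mathcal{U}$ there is $D\in\mathcal{U}$ such that whenever $\Psi\in Act(G,X)$ satisfies $(\Psi_s(x),\Phi_s(x))\in D$ for all $x\in X$, $s\in S$, there is a continuous $f:X\to X$ with $\Phi_g\circ f=f\circ\Psi_g$ for all $g$ and $(x,f(x))\in E$ for all $x$. - $\Phi$ is persistent if for every $E$ there is $D$ such that for every such $\Psi$ and every $x\in X$ there is $y$ with $(\Psi_g(x),\Phi_g(y))\in E$ for all $g\in G$. - $\Phi$ has $\mu$-shadowing if for every $E$ there are $D$ and a measurable $B$ with $\mu(X\setminus B)=0$ such that every $D$-pseudo orbit through $B$ is $E$-shadowed by some point. - $\Phi$ is $\mu$-topologically stable if for every $E$ there is $D$ such that for every such $\Psi$ there is an upper semi-continuous compact-valued set-valued map $H:X\to\mathcal{P}(X)$ with measurable domain $Dom(H)=\{x\mid H(x)\neq\emptyset\}$ satisfying $\mu(X\setminus Dom(H))=0$, $\mu(H(x))=0$ for all $x$, $H(x)\subset E[x]$ for all $x$, and $\Phi_g\circ H=H\circ\Psi_g$ for all $g\in G$. ($H$ is upper semi-continuous if for every $x\in Dom(H)$ and open $O\supset H(x)$ there is $D'\in\mathcal{U}$ with $H(y)\subset O$ whenever $(x,y)\in D'$.) - $\Phi$ is $\mu$-persistent if for every $E$ there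 are $D$ and a measurable $B$ with $\mu(X\setminus B)=0$ such that for every such $\Psi$ and every $x\in B$ there is $y$ with $(\Psi_g(x),\Phi_g(y))\in E$ for all $g\in G$. *)

(* Defs.v *)
From HB Require Import structures.
From mathcomp Require Import all_boot all_order all_algebra.
From mathcomp Require Import monoid.
From mathcomp Require Import all_classical all_reals all_analysis.

Set Implicit Arguments.
Unset Strict Implicit.
Unset Printing Implicit Defensive.

Local Open Scope classical_set_scope.

Definition generates (G : groupType) (S : set G) : Prop :=
  forall P : set G,
    P 1%g -> (forall x y, P x -> P y -> P (x * y)%g) -> (forall x, P x -> P (x^-1)%g) ->
    S `<=` P -> P = setT.

Definition fin_sym_gen_set (G : groupType) (S : set G) : Prop :=
  [/\ finite_set S, (forall s, S s -> S (s^-1)%g) & generates S].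

Definition ent_comp (X : Type) (U V : set (X * X)) : set (X * X) :=
  [set xy | exists z, U (xy.1, z) /\ V (z, xy.2)].

Definition ent_sec (X : Type) (D : set (X * X)) (x : X) : set X :=
  [set y | D (x, y)].

Definition uniform_equiv (X : puniformType) (f : X -> X) : Prop :=
  unif_continuous f /\
  exists g : X -> X, [/\ cancel f g, cancel g f & unif_continuous g].

Definition is_action (G : groupType) (X : puniformType) (Phi : G -> X -> X) : Prop :=
  [/\ (forall g, uniform_equiv (Phi g)),
      Phi 1%g = id
    & forall g1 g2, Phi (g1 * g2)%g = Phi g1 \o Phi g2].

Definition pseudo_orbit (G : groupType) (X : puniformType) (Phi : G -> X -> X)
    (S : set G) (D : set (X * X)) (xs : G -> X) : Prop :=
  forall s g, S s -> D (xs (s * g)%g, Phi s (xs g)).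

Definition shadowed (G : groupType) (X : puniformType) (Phi : G -> X -> X)
    (E : set (X * X)) (xs : G -> X) (x : X) : Prop :=
  forall g, E (xs g, Phi g x).

Definition D_close (G : groupType) (X : puniformType) (Phi Psi : G -> X -> X)
    (S : set G) (D : set (X * X)) : Prop :=
  forall x s, S s -> D (Psi s x, Phi s x).

Definition has_shadowing (G : groupType) (X : puniformType) (Phi : G -> X -> X)
    (S : set G) : Prop :=
  forall E, entourage E -> exists2 D, entourage D &
    forall xs, pseudo_orbit Phi S D xs -> exists x, shadowed Phi E xs x.

Definition top_stable (G : groupType) (X : puniformType) (Phi : G -> X -> X)
    (S : set G) : Prop :=
  forall E, entourage E -> exists2 D, entourage D &
    forall Psi : G -> X -> X, is_action Psi -> D_close Phi Psi S D ->
      exists f : X -> X, [/\ continuous f,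
        (forall g, Phi g \o f = f \o Psi g) & (forall x, E (x, f x))].

Definition persistent (G : groupType) (X : puniformType) (Phi : G -> X -> X)
    (S : set G) : Prop :=
  forall E, entourage E -> exists2 D, entourage D &
    forall Psi : G -> X -> X, is_action Psi -> D_close Phi Psi S D ->
      forall x, exists y, forall g, E (Psi g x, Phi g y).

Notation borel_type X := (g_sigma_algebraType (@open X)).

Definition mu_shadowing (R : realType) (G : groupType) (X : puniformType)
    (mu : measure (borel_type X) R) (Phi : G -> X -> X)
    (S : set G) : Prop :=
  forall E, entourage E -> exists D, exists B : set (borel_type X),
    [/\ entourage D, measurable B, mu (~` B) = 0%E &
      forall xs, pseudo_orbit Phi S D xs -> B (xs 1%g) ->
        exists x, shadowed Phi E xs x].

Definition usc (X : puniformType) (H : X -> set X) : Prop :=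
  forall x, H x !=set0 -> forall O : set X, open O -> H x `<=` O ->
    exists2 D', entourage D' & forall y, D' (x, y) -> H y `<=` O.

Definition dom_sv (X : Type) (H : X -> set X) : set X := [set x | H x !=set0].

Definition mu_top_stable (R : realType) (G : groupType) (X : puniformType)
    (mu : measure (borel_type X) R) (Phi : G -> X -> X)
    (S : set G) : Prop :=
  forall E, entourage E -> exists2 D, entourage D &
    forall Psi : G -> X -> X, is_action Psi -> D_close Phi Psi S D ->
      exists H : X -> set X,
        [/\ usc H /\ (forall x, compact (H x)),
            measurable (dom_sv H : set (borel_type X)) /\
            mu (~` (dom_sv H : set (borel_type X))) = 0%E,
            (forall x, measurable (H x : set (borel_type X)) /\
                       mu (H x : set (borel_type X)) = 0%E),
            (forall x, H x `<=` ent_sec E x) &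
            (forall g x, Phi g @` H x = H (Psi g x))].

Definition mu_persistent (R : realType) (G : groupType) (X : puniformType)
    (mu : measure (borel_type X) R) (Phi : G -> X -> X)
    (S : set G) : Prop :=
  forall E, entourage E -> exists D, exists B : set (borel_type X),
    [/\ entourage D, measurable B, mu (~` B) = 0%E &
      forall Psi : G -> X -> X, is_action Psi -> D_close Phi Psi S D ->
        forall x, B x -> exists y, forall g, E (Psi g x, Phi g y)].

(* Main.v *)
Require Import Defs.
From HB Require Import structures.
From mathcomp Require Import all_boot all_order all_algebra.
From mathcomp Require Import monoid.
From mathcomp Require Import all_classical all_reals all_analysis.

Set Implicit Arguments.
Unset Strict Implicit.
Unset Printing Implicit Defensive.

Local Open Scope classical_set_scope.

Lemma uc_ent (X : puniformType) (f : X -> X) : unif_continuous f ->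
  forall E, entourage E -> exists2 E', entourage E' &
    forall a b, E' (a, b) -> E (f a, f b).
Proof.
move=> uf E hE; exists ((fun xy => (f xy.1, f xy.2)) @^-1` E) => //.
exact: uf.
Qed.

Lemma act_inv (G : groupType) (X : puniformType) (Phi : G -> X -> X) :
  is_action Phi -> forall x z,
    Phi (x^-1)%g (Phi x z) = z /\ Phi x (Phi (x^-1)%g z) = z.
Proof.
move=> [_ P1 PM] x z; split.
- have := congr1 (fun f => f z) (PM (x^-1)%g x).
  by rewrite mulVg P1 /= => h; rewrite -h.
- have := congr1 (fun f => f z) (PM x (x^-1)%g).
  by rewrite mulgV P1 /= => h; rewrite -h.
Qed.

Lemma fin_combine (G : groupType) (X : puniformType) (T : set G)
    (P : G -> set (X * X) -> Prop) : finite_set T ->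
  (forall t D D', D' `<=` D -> P t D -> P t D') ->
  (forall t, T t -> exists2 D, entourage D & P t D) ->
  exists2 D, entourage D & forall t, T t -> P t D.
Proof.
move=> /finite_seqP [s ->] mono; elim: s => [|a s IH] H.
  by exists setT; [exact: entourageT | by []].
have [D1 e1 p1] := H a (mem_head _ _).
have [D2 e2 p2] : exists2 D, entourage D & forall t, [set` s] t -> P t D.
  apply: IH => t ts; apply: H => /=; by rewrite inE ts orbT.
exists (D1 `&` D2); first exact: filterI.
move=> t /=; rewrite inE => /orP [/eqP -> | ts].
  by apply: mono p1 => ? [].
by apply: mono (p2 t ts) => ? [].
Qed.

Lemma po_word (G : groupType) (X : puniformType) (Phi : G -> X -> X)
    (S : set G) : generates S -> is_action Phi -> forall w E, entourage E ->
  exists2 D, entourage D & forall xs, pseudo_orbit Phi S D xs ->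
    forall g, E (xs (w * g)%g, Phi w (xs g)).
Proof.
move=> gen act w.
have [ue P1 PM] := act.
pose P := fun w => forall E, entourage E -> exists2 D, entourage D &
  forall xs, pseudo_orbit Phi S D xs -> forall g, E (xs (w * g)%g, Phi w (xs g)).
suff PT : P = setT by have : P w by rewrite PT.
apply: gen.
- move=> E hE; exists E => // xs _ g; rewrite mul1g P1; exact: entourage_refl.
- move=> x y Px Py E hE.
  have [ucx _] := ue x.
  have hE1 := entourage_split_ent hE.
  have [E2 hE2 cE2] := uc_ent ucx hE1.
  have [D1 hD1 pD1] := Px _ hE1.
  have [D2 hD2 pD2] := Py _ hE2.
  exists (D1 `&` D2); first exact: filterI.
  move=> xs po g.
  have po1 : pseudo_orbit Phi S D1 xs by move=> s h Ss; have [] := po s h Ss.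
  have po2 : pseudo_orbit Phi S D2 xs by move=> s h Ss; have [] := po s h Ss.
  apply: (entourage_split (Phi x (xs (y * g)%g)) hE).
    rewrite -mulgA; exact: pD1.
  rewrite PM /=; apply: cE2; exact: pD2.
- move=> x Px E hE.
  have [ucxi _] := ue (x^-1)%g.
  have [E2 hE2 cE2] := uc_ent ucxi (entourage_inv hE).
  have [D hD pD] := Px _ hE2.
  exists D => // xs po g.
  have := cE2 _ _ (pD xs po (x^-1 * g)%g).
  by rewrite mulVKg (act_inv act x _).1.
- move=> s Ss E hE; exists E => // xs po g; exact: po.
Qed.

Lemma close_word (G : groupType) (X : puniformType) (Phi : G -> X -> X)
    (S : set G) : generates S -> is_action Phi -> forall w E, entourage E ->
  exists2 D, entourage D & forall Psi, is_action Psi -> D_close Phi Psi S D ->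
    forall z, E (Psi w z, Phi w z).
Proof.
move=> gen act w.
have [ue P1 PM] := act.
pose P := fun w => forall E, entourage E -> exists2 D, entourage D &
  forall Psi, is_action Psi -> D_close Phi Psi S D ->
    forall z, E (Psi w z, Phi w z).
suff PT : P = setT by have : P w by rewrite PT.
apply: gen.
- move=> E hE; exists E => // Psi [_ Q1 _] _ z; rewrite Q1 P1.
  exact: entourage_refl.
- move=> x y Px Py E hE.
  have [ucx _] := ue x.
  have hE1 := entourage_split_ent hE.
  have [E2 hE2 cE2] := uc_ent ucx hE1.
  have [D1 hD1 pD1] := Px _ hE1.
  have [D2 hD2 pD2] := Py _ hE2.
  exists (D1 `&` D2); first exact: filterI.
  move=> Psi actP cl z.
  have cl1 : D_close Phi Psi S D1 by move=> u s Ss; have [] := cl u s Ss.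
  have cl2 : D_close Phi Psi S D2 by move=> u s Ss; have [] := cl u s Ss.
  have [_ _ QM] := actP.
  apply: (entourage_split (Phi x (Psi y z)) hE).
    rewrite QM /=; exact: pD1.
  rewrite PM /=; apply: cE2; exact: pD2.
- move=> x Px E hE.
  have [ucxi _] := ue (x^-1)%g.
  have [E2 hE2 cE2] := uc_ent ucxi (entourage_inv hE).
  have [D hD pD] := Px _ hE2.
  exists D => // Psi actP cl z.
  have := cE2 _ _ (pD Psi actP cl (Psi (x^-1)%g z)).
  by rewrite (act_inv actP x _).2 (act_inv act x _).1.
- move=> s Ss E hE; exists E => // Psi _ cl z; exact: cl.
Qed.

Section Transfer.
Variables (G : groupType) (X : puniformType) (Phi : G -> X -> X).

Definition POT (S T : set G) := forall E, entourage E -> exists2 D, entourage D &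
  forall xs, pseudo_orbit Phi S D xs -> pseudo_orbit Phi T E xs.

Definition CLT (S T : set G) := forall E, entourage E -> exists2 D, entourage D &
  forall Psi, is_action Psi -> D_close Phi Psi S D -> D_close Phi Psi T E.

Lemma POT_gen S T : generates S -> finite_set T -> is_action Phi -> POT S T.
Proof.
move=> gen fT act E hE.
have [D hD pD] := fin_combine
  (P := fun t D => forall xs, pseudo_orbit Phi S D xs ->
     forall g, E (xs (t * g)%g, Phi t (xs g))) fT
  (fun t D D' sD h xs po => h xs (fun s g Ss => sD _ (po s g Ss)))
  (fun t _ => po_word gen act t hE).
exists D => // xs po s g Ts; exact: pD.
Qed.

Lemma CLT_gen S T : generates S -> finite_set T -> is_action Phi -> CLT S T.
Proof.
move=> gen fT act E hE.
have [D hD pD] := fin_combine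
  (P := fun t D => forall Psi, is_action Psi -> D_close Phi Psi S D ->
     forall z, E (Psi t z, Phi t z)) fT
  (fun t D D' sD h Psi aP cl => h Psi aP (fun z s Ss => sD _ (cl z s Ss)))
  (fun t _ => close_word gen act t hE).
exists D => // Psi aP cl z s Ts; exact: pD.
Qed.

End Transfer.

Theorem lemma2p5 (R : realType) (G : groupType) (X : puniformType)
    (S T : set G) (Phi : G -> X -> X)
    (mu : measure (borel_type X) R) :
  fin_sym_gen_set S -> fin_sym_gen_set T -> S <> T ->
  is_action Phi ->
  ((has_shadowing Phi S <-> has_shadowing Phi T) /\
   (top_stable Phi S <-> top_stable Phi T) /\
   (persistent Phi S <-> persistent Phi T) /\
   (mu_shadowing mu Phi S <-> mu_shadowing mu Phi T) /\
   (mu_top_stable mu Phi S <-> mu_top_stable mu Phi T) /\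
   (mu_persistent mu Phi S <-> mu_persistent mu Phi T)).
Proof.
move=> [fS _ gS] [fT _ gT] _ act.
have pST := POT_gen gS fT act; have pTS := POT_gen gT fS act.
have cST := CLT_gen gS fT act; have cTS := CLT_gen gT fS act.
have shad : forall A B, POT Phi B A -> has_shadowing Phi A -> has_shadowing Phi B.
  move=> A B p h E hE; have [D1 hD1 p1] := h E hE.
  have [D hD pD] := p D1 hD1; exists D => // xs po; exact: p1 (pD xs po).
have tops : forall A B, CLT Phi B A -> top_stable Phi A -> top_stable Phi B.
  move=> A B p h E hE; have [D1 hD1 p1] := h E hE.
  have [D hD pD] := p D1 hD1; exists D => // Psi aP cl; exact: p1 _ aP (pD _ aP cl).
have pers : forall A B, CLT Phi B A -> persistent Phi A -> persistent Phi B.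
  move=> A B p h E hE; have [D1 hD1 p1] := h E hE.
  have [D hD pD] := p D1 hD1; exists D => // Psi aP cl; exact: p1 _ aP (pD _ aP cl).
have mshad : forall A B, POT Phi B A -> mu_shadowing mu Phi A -> mu_shadowing mu Phi B.
  move=> A B p h E hE; have [D1 [B1 [hD1 mB nB p1]]] := h E hE.
  have [D hD pD] := p D1 hD1; exists D, B1; split => // xs po; exact: p1 (pD xs po).
have mtops : forall A B, CLT Phi B A -> mu_top_stable mu Phi A -> mu_top_stable mu Phi B.
  move=> A B p h E hE; have [D1 hD1 p1] := h E hE.
  have [D hD pD] := p D1 hD1; exists D => // Psi aP cl; exact: p1 _ aP (pD _ aP cl).
have mpers : forall A B, CLT Phi B A -> mu_persistent mu Phi A -> mu_persistent mu Phi B.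
  move=> A B p h E hE; have [D1 [B1 [hD1 mB nB p1]]] := h E hE.
  have [D hD pD] := p D1 hD1; exists D, B1; split => // Psi aP cl; exact: p1 _ aP (pD _ aP cl).
split; first by split; apply: shad.
split; first by split; apply: tops.
split; first by split; apply: pers.
split; first by split; apply: mshad.
split; first by split; apply: mtops.
by split; apply: mpers.
Qed.
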